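(* Let $\varphi$ be an automorphism of the Grassmann algebra $E$ with $\varphi^{2}=\mathrm{id}_E$, and let $\beta=\{e_1,e_2,\ldots\}$ be a basis of $L$ (the generators of $E$). Put $I_\beta=\{n\in\mathbb{N}\mid \varphi(e_n)=\pm e_n\}$. Suppose that $I_\beta$ is infinite and $I_\beta\neq\mathbb{N}$. Then $\varphi$ is of canonical type, i.e. $\varphi(E_{(0)})=E_{(0)}$ and $\varphi(E_{(1)})=E_{(1)}$.
   Context: $F$ is a field of characteristic zero, $L$ is an infinite-dimensional $F$-vector space with basis $e_1,e_2,\ldots$, and $E$ is the Grassmann (exterior) algebra of $L$: it has basis $1$ and the monomials $e_{i_1}\cdots e_{i_k}$ with $i_1<\cdots<i_k$, $k\ge1$, with $e_ie_j=-e_je_i$. The natural grading $E_{can}=E_{(0)}\oplus E_{(1)}$ has $E_{(0)}$ spanned by $1$ and the monomials of even length and $E_{(1)}$ spanned by the monomials of odd length. An automorphism $\varphi$ of $E$ with $\varphi^2=\mathrm{id}$ is of canonical type if $\varphi(E_{(0)})=E_{(0)}$ and $\varphi(E_{(1)})=E_{(1)}$. *)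

(* Defs.v *)
(* An element of E is represented by its coefficient function on monomials
   e_S (S a finite set of indices); genuine elements of E are those with
   finite support ([gfin]). *)
From HB Require Import structures.
From mathcomp Require Import all_boot all_order all_algebra.
From mathcomp Require Import finmap.
Set Implicit Arguments. Unset Strict Implicit. Unset Printing Implicit Defensive.
Import GRing.Theory.
Local Open Scope ring_scope.


Definition grass (F : fieldType) := {fset nat} -> F.

Definition gfin (F : fieldType) (x : grass F) : Prop :=
  exists N : nat, forall S : {fset nat}, x S != 0 -> forall i, i \in S -> (i < N)%N.

Definition gmon (F : fieldType) (S : {fset nat}) : grass F :=
  fun T => if T == S then 1 else 0.
Definition gen (F : fieldType) (n : nat) : grass F := gmon F [fset n]%fset.
Definition gzero (F : fieldType) : grass F := fun _ => 0.
Definition gone (F : fieldType) : grass F := gmon F fset0%fset.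
Definition gadd (F : fieldType) (x y : grass F) : grass F := fun S => x S + y S.
Definition gscale (F : fieldType) (a : F) (x : grass F) : grass F := fun S => a * x S.

Definition inv_count (S T : {fset nat}) : nat :=
  (\sum_(s <- S) size [seq t <- (T : seq nat) | (t < s)%N])%N.

(* e_S e_T = (-1)^(inv_count S T) e_(S u T) if S, T disjoint, 0 otherwise *)
Definition gmul (F : fieldType) (x y : grass F) : grass F :=
  fun U => \sum_(S <- fpowerset U)
             (-1) ^+ inv_count S (U `\` S)%fset * x S * y (U `\` S)%fset.

Definition glin (F : fieldType) (s : seq nat) (c : nat -> F) (b : nat -> grass F)
  : grass F := fun S => \sum_(i <- s) c i * b i S.

Definition in_L (F : fieldType) (x : grass F) : Prop :=
  gfin x /\ forall S : {fset nat}, #|` S|%fset != 1%N -> x S = 0.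
Definition in_E0 (F : fieldType) (x : grass F) : Prop :=
  gfin x /\ forall S : {fset nat}, odd #|` S|%fset -> x S = 0.
Definition in_E1 (F : fieldType) (x : grass F) : Prop :=
  gfin x /\ forall S : {fset nat}, ~~ odd #|` S|%fset -> x S = 0.

Definition involutive_aut (F : fieldType) (phi : grass F -> grass F) : Prop :=
  (forall x, gfin x -> gfin (phi x)) /\
  [/\ forall x y, gfin x -> gfin y -> phi (gadd x y) = gadd (phi x) (phi y),
      forall a x, gfin x -> phi (gscale a x) = gscale a (phi x),
      forall x y, gfin x -> gfin y -> phi (gmul x y) = gmul (phi x) (phi y),
      phi (gone F) = gone F &
      forall x, gfin x -> phi (phi x) = x].

Definition basis_of_L (F : fieldType) (b : nat -> grass F) : Prop :=
  [/\ forall n, in_L (b n),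
      forall (s : seq nat) (c : nat -> F), uniq s -> glin s c b = gzero F ->
        forall i, i \in s -> c i = 0 &
      forall x, in_L x -> exists (s : seq nat) (c : nat -> F), x = glin s c b].

Definition maps_onto (F : fieldType) (phi : grass F -> grass F)
  (P : grass F -> Prop) : Prop :=
  (forall x, P x -> P (phi x)) /\ (forall y, P y -> exists2 x, P x & phi x = y).

Definition canonical_type (F : fieldType) (phi : grass F -> grass F) : Prop :=
  maps_onto phi (@in_E0 F) /\ maps_onto phi (@in_E1 F).

Definition I_beta (F : fieldType) (phi : grass F -> grass F) (b : nat -> grass F)
  (n : nat) : Prop :=
  phi (b n) = b n \/ phi (b n) = gscale (-1) (b n).

(* Main.v *)
Require Import Defs.
From HB Require Import structures.
From mathcomp Require Import all_boot all_order all_algebra.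
From mathcomp Require Import finmap.
From mathcomp Require Import zify ring.
From Stdlib Require Import FunctionalExtensionality.
Set Implicit Arguments. Unset Strict Implicit. Unset Printing Implicit Defensive.
Import GRing.Theory.

Definition inv' (s t : seq nat) : nat := (\sum_(a <- s) count (fun b => b < a) t)%N.

Lemma count_lt_gt (a : nat) (t : seq nat) : a \notin t ->
  (count (fun b => b < a) t + count (fun b => a < b) t)%N = size t.
Proof.
elim: t => //= b t IH; rewrite inE negb_or => /andP[nab /IH <-].
case: (ltngtP b a) nab => //= _ _; lia.
Qed.

Lemma sum_bool (p : pred nat) t : (\sum_(b <- t) (p b : nat))%N = count p t.
Proof. by elim: t => [|c t IH]; rewrite ?big_nil ?big_cons ?IH. Qed.

Lemma inv_sum (s t : seq nat) : all (fun a => a \notin t) s ->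
  (inv' s t + inv' t s = size s * size t)%N.
Proof.
rewrite /inv'; elim: s => [|a s IH] /=.
  by rewrite big_nil big1 // => b _.
move=> /andP[aT /IH {}IH]; rewrite big_cons.
have -> : (\sum_(a0 <- t) count (fun b => b < a0) (a :: s) =
   \sum_(b <- t) ((fun b => a < b) b : nat) + \sum_(a0 <- t) count (fun b => b < a0) s)%N.
  by rewrite -big_split.
rewrite sum_bool; have h := count_lt_gt aT; change (count (fun b => (a < b)%N) t) with (count (leq a.+1) t) in h; lia.
Qed.

Local Open Scope ring_scope.

Lemma inv_countE (S T : {fset nat}) : inv_count S T = inv' S T.
Proof. by rewrite /inv_count /inv'; apply: eq_bigr => a _; rewrite size_filter. Qed.

Lemma gmul_comm_sign (F : fieldType) (x y : grass F) (e : F) :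
  (forall S T, x S != 0 -> y T != 0 -> (-1) ^+ (#|` S| * #|` T|)%N = e) ->
  forall U, gmul y x U = e * gmul x y U.
Proof.
move=> H U; rewrite /gmul.
have P : perm_eq (fpowerset U) (map (fun S => U `\` S)%fset (fpowerset U)).
  apply: uniq_perm; first exact: fset_uniq.
    rewrite map_inj_in_uniq ?fset_uniq // => A B.
    rewrite !fpowersetE => AU BU e1.
    by rewrite -(fsetDK AU) e1 fsetDK.
  move=> S; apply/idP/mapP.
    rewrite fpowersetE => SU; exists (U `\` S)%fset; last by rewrite fsetDK.
    by rewrite fpowersetE fsubsetDl.
  by move=> [A _ ->]; rewrite fpowersetE fsubsetDl.
rewrite (perm_big _ P) big_map big_distrr /=.
apply: eq_big_seq => S; rewrite fpowersetE => SU; rewrite fsetDK //.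
case: (eqVneq (x S) 0) => [->|xS]; first by rewrite !(mulr0, mul0r).
case: (eqVneq (y (U `\` S)%fset) 0) => [->|yS]; first by rewrite !(mulr0, mul0r).
rewrite -(H _ _ xS yS).
have dis : all (fun a => a \notin (U `\` S)%fset) S.
  by apply/allP => a aS; rewrite in_fsetD aS.
rewrite -(inv_sum dis) !inv_countE exprD.
set a := (-1) ^+ inv' S _; set c := (-1) ^+ inv' _ S.
have a2 : a * a = 1 by rewrite /a -exprD -signr_odd oddD addbb.
transitivity ((a * a) * (c * y (U `\` S)%fset * x S)); first by rewrite a2 mul1r.
ring.
Qed.

Lemma gmul_annih (F : fieldType) (a v : grass F) (M j : nat) :
  (forall S, a S != 0 -> forall i, i \in S -> (i < M)%N) ->
  (forall T, #|` T| != 1%N -> v T = 0) -> (M <= j)%N -> v [fset j]%fset != 0 ->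
  (forall U, gmul a v U = 0) -> forall S, a S = 0.
Proof.
move=> Ha Hv Mj vj Hm S; apply/eqP; apply: contraT => aS.
have jS : j \notin S by apply/negP => /(Ha _ aS); rewrite ltnNge Mj.
have := Hm (S `|` [fset j])%fset; rewrite /gmul (bigD1_seq S) /=; last first.
- exact: fset_uniq.
- by rewrite fpowersetE fsubsetUl.
have -> : ((S `|` [fset j]) `\` S)%fset = [fset j]%fset.
  apply/fsetP => x; rewrite !inE; case: (eqVneq x j) => [->|_].
    by rewrite (negbTE jS).
  by case: (x \in S).
rewrite (@big1_seq _ 0 (@GRing.add F)) ?addr0; first by move/eqP; rewrite !mulf_eq0 signr_eq0 (negbTE aS) (negbTE vj).
move=> S' /andP[nS' S'U]; rewrite fpowersetE in S'U.
case: (eqVneq (a S') 0) => [->|aS']; first by rewrite !(mulr0, mul0r).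
case: (eqVneq (v ((S `|` [fset j]) `\` S')%fset) 0) => [->|vS']; first by rewrite !(mulr0, mul0r).
exfalso; move: nS' => /eqP; apply.
have jS' : j \notin S' by apply/negP => /(Ha _ aS'); rewrite ltnNge Mj.
have : #|` ((S `|` [fset j]) `\` S')%fset| == 1%N by apply: contraT => /Hv h; rewrite h eqxx in vS'.
move=> /cardfs1P [t Ht].
have jt : j = t.
  apply/fset1P; rewrite -Ht in_fsetD (negbTE jS') /= in_fsetU in_fset1 eqxx orbT //.
apply/fsetP => x; apply/idP/idP => xin.
  have xU := fsubsetP S'U x xin; move: xU; rewrite in_fsetU in_fset1 => /orP[//|/eqP xj].
  by move: xin; rewrite xj (negbTE jS').
case: (boolP (x \in S')) => // xn.
have : x \in ((S `|` [fset j]) `\` S')%fset by rewrite in_fsetD xn in_fsetU xin.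
by rewrite Ht -jt => /fset1P xj; move: xin; rewrite xj (negbTE jS).
Qed.

Lemma gfin_gmul (F : fieldType) (x y : grass F) : gfin x -> gfin y -> gfin (gmul x y).
Proof.
move=> [Nx Hx] [Ny Hy]; exists (maxn Nx Ny) => U.
rewrite /gmul => nz.
have [S SU tS] : exists2 S, S \in fpowerset U &
   (-1) ^+ inv_count S (U `\` S)%fset * x S * y (U `\` S)%fset != 0.
  case: (boolP (has (fun S => (-1) ^+ inv_count S (U `\` S)%fset * x S * y (U `\` S)%fset != 0) (fpowerset U))).
    by move/hasP.
  move/hasPn => H; move: nz; rewrite big1_seq ?eqxx // => S /= SU.
  by apply/eqP; move: (H S SU); rewrite negbK.
move: tS; rewrite !mulf_eq0 !negb_or => /andP[/andP[_ xS] yS] i iU.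
case: (boolP (i \in S)) => iS.
  by apply: leq_trans (Hx _ xS _ iS) _; rewrite leq_maxl.
have : i \in (U `\` S)%fset by rewrite in_fsetD iS.
by move/(Hy _ yS) => h; apply: leq_trans h _; rewrite leq_maxr.
Qed.

Lemma gfin_gen (F : fieldType) n : gfin (gen F n).
Proof.
exists n.+1 => S; rewrite /gen /gmon; case: (S =P [fset n]%fset) => [-> _ i /fset1P -> //|].
by rewrite eqxx.
Qed.

Definition gev (F : fieldType) (x : grass F) : grass F :=
  fun S => if odd #|` S| then 0 else x S.
Definition god (F : fieldType) (x : grass F) : grass F :=
  fun S => if odd #|` S| then x S else 0.

Lemma gsplit (F : fieldType) (x : grass F) : x = gadd (gev x) (god x).
Proof.
apply: functional_extensionality => S; rewrite /gadd /gev /god.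
by case: odd; rewrite ?add0r ?addr0.
Qed.

Lemma gmul_addl (F : fieldType) (x y z : grass F) :
  gmul (gadd x y) z = gadd (gmul x z) (gmul y z).
Proof.
apply: functional_extensionality => U; rewrite /gmul /gadd -big_split.
by apply: eq_bigr => S _ /=; ring.
Qed.

Lemma gmul_addr (F : fieldType) (x y z : grass F) :
  gmul z (gadd x y) = gadd (gmul z x) (gmul z y).
Proof.
apply: functional_extensionality => U; rewrite /gmul /gadd -big_split.
by apply: eq_bigr => S _ /=; ring.
Qed.

Lemma gmul_scalel (F : fieldType) c (x z : grass F) :
  gmul (gscale c x) z = gscale c (gmul x z).
Proof.
apply: functional_extensionality => U; rewrite /gmul /gscale big_distrr.
by apply: eq_bigr => S _ /=; ring.
Qed.

Lemma gmul_scaler (F : fieldType) c (x z : grass F) :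
  gmul z (gscale c x) = gscale c (gmul z x).
Proof.
apply: functional_extensionality => U; rewrite /gmul /gscale big_distrr.
by apply: eq_bigr => S _ /=; ring.
Qed.

Lemma twice (F : fieldType) (a : F) : [pchar F] =i pred0 -> a + a = 0 -> a = 0.
Proof.
move=> ch; rewrite -mulr2n -mulr_natl => /eqP; rewrite mulf_eq0 => /orP[|/eqP//].
by rewrite ((pcharf0P F).1 ch).
Qed.

Lemma dim_contra (F : fieldType) (b : nat -> grass F) (P : nat -> Prop) (M : nat) :
  basis_of_L b -> (forall N, exists2 n, (N <= n)%N & P n) ->
  (forall n, P n -> forall j, (M <= j)%N -> b n [fset j]%fset = 0) -> False.
Proof.
move=> [bL bind _] Hinf Hsupp.
have seqs : forall k, exists s : seq nat,
    [/\ uniq s, size s = k & forall n, n \in s -> P n].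
  elim=> [|k [s [us ss Ps]]]; first by exists [::].
  have [n Nn Pn] := Hinf (\max_(i <- s) i).+1.
  have ns : n \notin s.
    apply/negP => ns; have := @leq_bigmax_seq _ s xpredT id n ns isT.
    move: Nn; rewrite /=; lia.
  exists (n :: s); split => /=; [by rewrite ns us | by rewrite ss |].
  by move=> m; rewrite inE => /orP[/eqP->|/Ps].
have [s [us ss Ps]] := seqs M.+1.
pose f (k : 'I_M.+1) := nth 0%N s k.
have finj : injective f.
  move=> k1 k2 /eqP; rewrite /f nth_uniq ?ss // => /eqP /val_inj //.
have Pf : forall k, P (f k) by move=> k; apply: Ps; rewrite /f mem_nth // ss.
pose A : 'M[F]_(M.+1, M) := \matrix_(k, j) b (f k) [fset (j : nat)]%fset.
have nrf : ~~ row_free A.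
  rewrite /row_free; apply/negP => /eqP h; have := rank_leq_col A; by rewrite h ltnn.
have : kermx A != 0 by rewrite kermx_eq0.
set K := kermx A => Knz.
have [i ri] : exists i, row i K != 0.
  case: (boolP [exists i, row i K != 0]) => [/existsP//|].
  rewrite negb_exists => /forallP H; move: Knz; suff -> : K = 0 by rewrite eqxx.
  by apply/row_matrixP => i; rewrite row0; apply/eqP; move: (H i); rewrite negbK.
set v := row i K.
have vA : v *m A = 0 by rewrite /v -row_mul mulmx_ker row0.
have [k0 vk0] : exists k0, v 0 k0 != 0.
  case: (boolP [exists k, v 0 k != 0]) => [/existsP//|].
  rewrite negb_exists => /forallP H; suff vz : v = 0 by move: ri; rewrite -/v vz eqxx.
  by apply/rowP => k; rewrite [RHS]mxE; apply/eqP; move: (H k); rewrite negbK.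
pose c := fun n => \sum_(k < M.+1 | f k == n) v 0 k.
have cf : forall k, c (f k) = v 0 k.
  by move=> k; rewrite /c (big_pred1 k) // => k'; rewrite /= inj_eq.
pose s0 := map f (index_enum 'I_M.+1).
have us0 : uniq s0 by rewrite map_inj_uniq // index_enum_uniq.
have g0 : glin s0 c b = gzero F.
  apply: functional_extensionality => S; rewrite /glin /gzero big_map.
  under eq_bigr => k _ do rewrite cf.
  case: (boolP (#|` S| == 1%N)) => [/cardfs1P [j ->]|nS]; last first.
    by rewrite big1 // => k _; have [_ H] := bL (f k); rewrite H // mulr0.
  case: (ltnP j M) => jM.
    transitivity ((v *m A) 0 (Ordinal jM)); last by rewrite vA mxE.
    by rewrite mxE; apply: eq_bigr => k _; rewrite /A !mxE.
  by rewrite big1 // => k _; rewrite Hsupp ?mulr0.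
have := bind s0 c us0 g0 (f k0) (map_f f (mem_index_enum k0)); rewrite cf => h.
by rewrite h eqxx in vk0.
Qed.

Lemma gen_supp (F : fieldType) n (T : {fset nat}) : gen F n T != 0 -> T = [fset n]%fset.
Proof. by rewrite /gen /gmon; case: (T =P [fset n]%fset) => // _; rewrite eqxx. Qed.

Lemma gen_card (F : fieldType) n (T : {fset nat}) : #|` T| != 1%N -> gen F n T = 0.
Proof. by rewrite /gen /gmon; case: (T =P [fset n]%fset) => // ->; rewrite cardfs1. Qed.

Lemma gen_self (F : fieldType) n : gen F n [fset n]%fset != 0.
Proof. by rewrite /gen /gmon eqxx oner_neq0. Qed.

Lemma gev_even (F : fieldType) (w : grass F) S : gev w S != 0 -> ~~ odd #|` S|.
Proof. by rewrite /gev; case: odd; rewrite ?eqxx. Qed.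

Lemma god_odd (F : fieldType) (w : grass F) S : god w S != 0 -> odd #|` S|.
Proof. by rewrite /god; case: odd; rewrite ?eqxx. Qed.

Lemma gev_supp (F : fieldType) (w : grass F) S : gev w S != 0 -> w S != 0.
Proof. by rewrite /gev; case: odd; rewrite ?eqxx. Qed.

Lemma god_supp (F : fieldType) (w : grass F) S : god w S != 0 -> w S != 0.
Proof. by rewrite /god; case: odd; rewrite ?eqxx. Qed.

Lemma sign_even (F : fieldType) m n : ~~ odd m -> (-1) ^+ (m * n)%N = 1 :> F.
Proof. by move=> em; rewrite -signr_odd oddM (negbTE em). Qed.

Lemma sign_odd1 (F : fieldType) m : odd m -> (-1) ^+ (m * 1)%N = -1 :> F.
Proof. by move=> om; rewrite muln1 -signr_odd om. Qed.

Lemma E0_pres (F : fieldType) (charF0 : [pchar F] =i pred0) (phi : grass F -> grass F) :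
  involutive_aut phi -> forall x, in_E0 x -> in_E0 (phi x).
Proof.
move=> [fin [padd pscal pmul pone pinv]] x [fx ex].
split; first exact: fin.
have fw := fin x fx; have [M HM] := fw.
set w := phi x in fw HM *.
pose g := gen F M.
have gg : gfin g := gfin_gen F M.
have gpg : gfin (phi g) := fin _ gg.
have cx : gmul (phi g) x = gmul x (phi g).
  apply: functional_extensionality => U.
  rewrite (gmul_comm_sign (e := 1)) ?mul1r // => S T xS _.
  apply: sign_even; by apply: contra xS => /ex ->.
have comm : gmul w g = gmul g w.
  have e1 : gmul w g = phi (gmul x (phi g)) by rewrite pmul // pinv.
  have e2 : gmul g w = phi (gmul (phi g) x) by rewrite pmul // pinv.
  by rewrite e1 e2 cx.
have Hw : forall U, gmul (god w) g U = 0.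
  move=> U; apply: (twice charF0).
  have h := congr1 (fun h => h U) comm; simpl in h.
  rewrite {1}(gsplit w) in h; rewrite {3}(gsplit w) gmul_addl gmul_addr /gadd in h.
  rewrite (gmul_comm_sign (x := gev w) (y := g) (e := 1)) in h; last first.
    by move=> S T /gev_even eS _; apply: sign_even.
  rewrite (gmul_comm_sign (x := god w) (y := g) (e := -1)) in h; last first.
    by move=> S T /god_odd oS /gen_supp ->; rewrite cardfs1; apply: sign_odd1.
  move: h; rewrite mul1r mulN1r => /addrI h.
  by rewrite {1}h addNr.
have od0 : forall S, god w S = 0.
  apply: (gmul_annih (v := g) (M := M) (j := M)) => //.
  - by move=> S /god_supp; apply: HM.
  - by move=> T; apply: gen_card.
  - exact: gen_self.
by move=> S oS; have := od0 S; rewrite /god oS.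
Qed.

Lemma E1_pres (F : fieldType) (charF0 : [pchar F] =i pred0) (phi : grass F -> grass F)
  (b : nat -> grass F) :
  involutive_aut phi -> basis_of_L b ->
  (forall N : nat, exists2 n : nat, (N <= n)%N & I_beta phi b n) ->
  forall x, in_E1 x -> in_E1 (phi x).
Proof.
move=> [fin [padd pscal pmul pone pinv]] bas Hinf x [fx ox].
have bas' := bas; case: bas' => [bL _ _].
split; first exact: fin.
have fw := fin x fx; have [M HM] := fw.
set w := phi x in fw HM *.
have bsupp : forall n T, b n T != 0 -> #|` T| = 1%N.
  move=> n T; have [_ H] := bL n; apply: contraNeq => /H ->; exact: eqxx.
have anti : forall n, I_beta phi b n -> forall U, gmul (gev w) (b n) U = 0.
  move=> n In.
  have [fb bcard] := bL n.
  have xb : gmul x (b n) = gscale (-1) (gmul (b n) x).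
    apply: functional_extensionality => U; rewrite /gscale (gmul_comm_sign (e := -1)) // => S T bS xT.
    rewrite (bsupp _ _ bS) mul1n -signr_odd; case: (boolP (odd #|` T|)) => // eT.
    by move: xT; rewrite ox ?eqxx.
  have key : gmul w (phi (b n)) = gscale (-1) (gmul (phi (b n)) w).
    rewrite -pmul // xb pscal ?pmul //; exact: gfin_gmul.
  have key2 : forall U, gmul w (b n) U = - gmul (b n) w U.
    move=> U; case: In => e; rewrite e in key.
    - by have := congr1 (fun h => h U) key; rewrite /gscale mulN1r.
    - have := congr1 (fun h => h U) key; rewrite gmul_scalel gmul_scaler /gscale !mulN1r.
      by move/oppr_inj.
  move=> U; apply: (twice charF0).
  have h := key2 U.
  rewrite {1}(gsplit w) in h; rewrite {3}(gsplit w) gmul_addl gmul_addr /gadd in h.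
  rewrite (gmul_comm_sign (x := gev w) (y := b n) (e := 1)) in h; last first.
    by move=> S T /gev_even eS _; apply: sign_even.
  rewrite (gmul_comm_sign (x := god w) (y := b n) (e := -1)) in h; last first.
    by move=> S T /god_odd oS /bsupp ->; apply: sign_odd1.
  move: h; rewrite mul1r mulN1r opprD opprK => /addIr h.
  by rewrite {1}h addNr.
move=> S eS; have <- : gev w S = w S by rewrite /gev (negbTE eS).
apply/eqP; apply: contraT => nz; exfalso.
apply: (dim_contra (P := I_beta phi b) (M := M) bas Hinf).
move=> n In j Mj; apply/eqP; apply: contraT => bj.
suff : gev w S = 0 by move=> h; rewrite h eqxx in nz.
apply: (gmul_annih _ _ Mj bj (anti n In)).
- by move=> S' /gev_supp; apply: HM.
- by have [_ H] := bL n.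
Qed.

Theorem mainTheorem1 (F : fieldType) (charF0 : [pchar F] =i pred0)
  (phi : grass F -> grass F) (b : nat -> grass F) :
  involutive_aut phi ->
  basis_of_L b ->
  (forall N : nat, exists2 n : nat, (N <= n)%N & I_beta phi b n) ->
  (exists n : nat, ~ I_beta phi b n) ->
  canonical_type phi.
Proof.
move=> inv bas Hinf _.
have pinv : forall x, gfin x -> phi (phi x) = x by case: inv => _ [].
split; split.
- exact: E0_pres.
- move=> y Ey; exists (phi y); first exact: E0_pres.
  by apply: pinv; case: Ey.
- exact: (E1_pres charF0 inv bas Hinf).
- move=> y Ey; exists (phi y); first exact: (E1_pres charF0 inv bas Hinf).
  by apply: pinv; case: Ey.
Qed.
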